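(* For all finite multisets $\Gamma,\Delta$ of S4 formulas and all S4 formulas $A,B$: if $\mathrm{G3s}\vdash \Gamma\supset\Delta,\Box A,\Box B$ and $\mathrm{G3s}\vdash\Gamma\supset\Delta,\Box(A\to B),\Box B$, then $\mathrm{G3s}\vdash\Gamma\supset\Delta,\Box B$.
   Context: S4 formulas: $A ::= \bot \mid P \mid A_0\to A_1 \mid \Box A$ ($P$ atomic). Sequents $\Gamma\supset\Delta$ use finite multisets; $\Box\Gamma:=\{\Box C\mid C\in\Gamma\}$. G3s rules: (Ax) $P,\Gamma\supset\Delta,P$ ($P$ atomic); $(\bot\supset)$ $\bot,\Gamma\supset\Delta$; $(\to\supset)$ from $\Gamma\supset\Delta,A$ and $B,\Gamma\supset\Delta$ infer $A\to B,\Gamma\supset\Delta$; $(\supset\to)$ from $A,\Gamma\supset\Delta,B$ infer $\Gamma\supset\Delta,A\to B$; $(\Box\supset)$ from $A,\Box A,\Gamma\supset\Delta$ infer $\Box A,\Gamma\supset\Delta$; $(\supset\Box)$ from $\Box\Gamma\supset A$ infer $\Gamma',\Box\Gamma\supset\Delta',\Box A$. *)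

(* Defs.v *)
(* Multisets of formulas are represented by lists, taken up to
   permutation: every rule's conclusion is stated modulo Permutation, so
   derivability is a predicate on multisets. *)
From Stdlib Require Import List Permutation.
Import ListNotations.

Inductive form : Type :=
| Bot : form
| Var : nat -> form
| Imp : form -> form -> form
| Box : form -> form.

Definition boxes (G : list form) : list form := map Box G.

Inductive G3s : list form -> list form -> Prop :=
| G3s_Ax : forall p G D G' D',
    Permutation G' (Var p :: G) -> Permutation D' (Var p :: D) ->
    G3s G' D'
| G3s_BotL : forall G D G',
    Permutation G' (Bot :: G) -> G3s G' D
| G3s_ImpL : forall A B G D G',
    G3s G (A :: D) -> G3s (B :: G) D ->
    Permutation G' (Imp A B :: G) -> G3s G' D
| G3s_ImpR : forall A B G D D',
    G3s (A :: G) (B :: D) ->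
    Permutation D' (Imp A B :: D) -> G3s G D'
| G3s_BoxL : forall A G D G',
    G3s (A :: Box A :: G) D ->
    Permutation G' (Box A :: G) -> G3s G' D
| G3s_BoxR : forall A G Gw Dw G' D',
    G3s (boxes G) [A] ->
    Permutation G' (Gw ++ boxes G) -> Permutation D' (Box A :: Dw) ->
    G3s G' D'.

(* Main.v *)
Require Import Defs.
From Stdlib Require Import List Permutation Arith Lia Wf_nat.
Import ListNotations.

Lemma form_eq_dec : forall x y : form, {x = y} + {x <> y}.
Proof. decide equality; apply Nat.eq_dec. Qed.

Ltac pdest := repeat (match goal with
  | |- context[form_eq_dec ?a ?b] => destruct (form_eq_dec a b)
  | H : context[form_eq_dec ?a ?b] |- _ => destruct (form_eq_dec a b) end; simpl in *).

Ltac pfin x :=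
  unfold boxes in *; rewrite ?map_app in *; rewrite ?count_occ_app in *; simpl in *;
  rewrite ?count_occ_app in *; simpl in *; pdest; try congruence; lia.

Ltac psolve0 :=
  let x := fresh "x" in
  apply (proj2 (Permutation_count_occ form_eq_dec _ _)); intro x;
  repeat match goal with H : Permutation _ _ |- _ => clear H end; pfin x.

Ltac psolve :=
  let x := fresh "x" in
  apply (proj2 (Permutation_count_occ form_eq_dec _ _)); intro x;
  repeat match goal with H : Permutation _ _ |- _ =>
    let H' := fresh in pose proof (proj1 (Permutation_count_occ form_eq_dec _ _) H x) as H'; clear H end;
  pfin x.

Inductive G3h : nat -> list form -> list form -> Prop :=
| H_Ax : forall n p G D G' D',
    Permutation G' (Var p :: G) -> Permutation D' (Var p :: D) -> G3h n G' D'
| H_Bot : forall n G D G', Permutation G' (Bot :: G) -> G3h n G' D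
| H_ImpL : forall n A B G D G',
    G3h n G (A :: D) -> G3h n (B :: G) D ->
    Permutation G' (Imp A B :: G) -> G3h (S n) G' D
| H_ImpR : forall n A B G D D',
    G3h n (A :: G) (B :: D) -> Permutation D' (Imp A B :: D) -> G3h (S n) G D'
| H_BoxL : forall n A G D G',
    G3h n (A :: Box A :: G) D -> Permutation G' (Box A :: G) -> G3h (S n) G' D
| H_BoxR : forall n A G Gw Dw G' D',
    G3h n (boxes G) [A] ->
    Permutation G' (Gw ++ boxes G) -> Permutation D' (Box A :: Dw) ->
    G3h (S n) G' D'.

Lemma G3h_perm : forall n G D, G3h n G D -> forall G2 D2,
  Permutation G G2 -> Permutation D D2 -> G3h n G2 D2.
Proof.
  induction 1; intros G2 D2 P1 P2.
  - eapply H_Ax; [rewrite <- P1 | rewrite <- P2]; eassumption.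
  - eapply H_Bot; rewrite <- P1; eassumption.
  - eapply H_ImpL; [apply IHG3h1 | apply IHG3h2 | rewrite <- P1; eassumption]; auto.
  - eapply H_ImpR; [apply IHG3h | rewrite <- P2; eassumption]; auto.
  - eapply H_BoxL; [apply IHG3h | rewrite <- P1; eassumption]; auto.
  - eapply H_BoxR; [eassumption | rewrite <- P1 | rewrite <- P2]; eassumption.
Qed.

Lemma G3h_mono : forall n G D, G3h n G D -> forall m, n <= m -> G3h m G D.
Proof.
  induction 1; intros m Hm.
  - eapply H_Ax; eassumption.
  - eapply H_Bot; eassumption.
  - destruct m; [lia|]. eapply H_ImpL; [apply IHG3h1 | apply IHG3h2 | ]; eauto; lia.
  - destruct m; [lia|]. eapply H_ImpR; [apply IHG3h | ]; eauto; lia.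
  - destruct m; [lia|]. eapply H_BoxL; [apply IHG3h | ]; eauto; lia.
  - destruct m; [lia|]. eapply H_BoxR; [apply IHG3h | |]; eauto; lia.
Qed.

Lemma G3h_weak : forall n G D, G3h n G D -> forall X Y, G3h n (X ++ G) (Y ++ D).
Proof.
  induction 1; intros X Y.
  - eapply (H_Ax _ p (X ++ G) (Y ++ D)); psolve.
  - eapply (H_Bot _ (X ++ G)); psolve.
  - eapply (H_ImpL _ A B (X ++ G)).
    + eapply G3h_perm; [apply (IHG3h1 X Y) | |]; psolve.
    + eapply G3h_perm; [apply (IHG3h2 X Y) | |]; psolve.
    + psolve.
  - eapply (H_ImpR _ A B _ (Y ++ D)).
    + eapply G3h_perm; [apply (IHG3h X Y) | |]; psolve.
    + psolve.
  - eapply (H_BoxL _ A (X ++ G)).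
    + eapply G3h_perm; [apply (IHG3h X Y) | |]; psolve.
    + psolve.
  - eapply (H_BoxR _ A G (X ++ Gw) (Y ++ Dw)); [eassumption | psolve | psolve].
Qed.

Lemma wkL : forall n G D A, G3h n G D -> G3h n (A :: G) D.
Proof. intros. apply (G3h_weak _ _ _ H [A] []). Qed.
Lemma wkR : forall n G D A, G3h n G D -> G3h n G (A :: D).
Proof. intros. apply (G3h_weak _ _ _ H [] [A]). Qed.

Lemma in_perm : forall (x : form) l, In x l -> exists k, Permutation l (x :: k).
Proof. intros. apply in_split in H as (a & b & ->). exists (a ++ b).
  symmetry; apply Permutation_middle. Qed.

Lemma ax_in : forall n p G D, In (Var p) G -> In (Var p) D -> G3h n G D.
Proof. intros. destruct (in_perm _ _ H) as [k1 H1]. destruct (in_perm _ _ H0) as [k2 H2].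
  eapply H_Ax; eassumption. Qed.
Lemma bot_in : forall n G D, In Bot G -> G3h n G D.
Proof. intros. destruct (in_perm _ _ H) as [k1 H1]. eapply H_Bot; eassumption. Qed.

Lemma pcase : forall (x y : form) l l', Permutation (x :: l) (y :: l') ->
  (x = y /\ Permutation l l') \/ (x <> y /\ exists k, Permutation l (y :: k) /\ Permutation l' (x :: k)).
Proof.
  intros. destruct (form_eq_dec x y) as [->|Hne].
  - left. split; auto. eapply Permutation_cons_inv; eauto.
  - right. split; auto.
    assert (In y l). { assert (In y (x :: l)) by (eapply Permutation_in; [symmetry; eauto | left; auto]).
      destruct H0; [congruence | auto]. }
    destruct (in_perm _ _ H0) as [k Hk]. exists k. split; auto.
    apply (Permutation_cons_inv (a := y)). rewrite <- H. rewrite Hk. apply perm_swap.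
Qed.

Lemma split_box : forall (x : form) l Gw S, Permutation (x :: l) (Gw ++ boxes S) ->
  (exists Gw', Permutation Gw (x :: Gw') /\ Permutation l (Gw' ++ boxes S)) \/
  (exists E S', x = Box E /\ Permutation S (E :: S') /\ Permutation l (Gw ++ boxes S')).
Proof.
  intros. assert (In x (Gw ++ boxes S)) by (eapply Permutation_in; eauto; left; auto).
  apply in_app_or in H0 as [H0|H0].
  - left. destruct (in_perm _ _ H0) as [k Hk]. exists k. split; auto.
    apply (Permutation_cons_inv (a := x)). rewrite H, Hk. reflexivity.
  - right. unfold boxes in H0. apply in_map_iff in H0 as (E & <- & HE).
    destruct (in_perm _ _ HE) as [k Hk]. exists E, k. split; auto. split; auto.
    apply (Permutation_cons_inv (a := Box E)). rewrite H. unfold boxes. rewrite Hk. simpl.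
    symmetry. apply Permutation_middle.
Qed.
Lemma pin : forall (x:form) l k, Permutation l (x :: k) -> In x l.
Proof. intros. eapply Permutation_in; [symmetry; eauto|left; auto]. Qed.
Ltac inhd := match goal with H: Permutation ?l (?x :: _) |- In ?x ?l => exact (pin _ _ _ H) end.
Lemma invImpR : forall n G D, G3h n G D -> forall A B D0,
  Permutation D (Imp A B :: D0) -> G3h n (A :: G) (B :: D0).
Proof.
  induction 1; intros A0 B0 D0 HP.
  - apply (ax_in _ p). right. inhd.
    assert (In (Var p) (Imp A0 B0 :: D0)) by (rewrite <- HP; inhd).
    destruct H1; [discriminate|right; auto].
  - apply bot_in. right. inhd.
  - eapply (H_ImpL _ A B (A0 :: G)).
    + eapply G3h_perm; [apply (IHG3h1 A0 B0 (A :: D0)) | |]; psolve.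
    + eapply G3h_perm; [apply (IHG3h2 A0 B0 D0) | |]; psolve.
    + psolve.
  - rewrite HP in H0. apply pcase in H0 as [[E P]|[Hne (k & P1 & P2)]].
    + injection E as -> ->. eapply G3h_mono; [eapply G3h_perm; [eassumption| |]|]; [reflexivity|psolve|lia].
    + eapply (H_ImpR _ A B _ (B0 :: k)).
      * eapply G3h_perm; [apply (IHG3h A0 B0 (B :: k)) | |]; psolve.
      * psolve.
  - eapply (H_BoxL _ A (A0 :: G)).
    + eapply G3h_perm; [apply (IHG3h A0 B0 D0) | |]; psolve.
    + psolve.
  - rewrite HP in H1. apply pcase in H1 as [[E P]|[Hne (k & P1 & P2)]]; [discriminate|].
    eapply (H_BoxR _ A G (A0 :: Gw) (B0 :: k)); [eassumption|psolve|psolve].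
Qed.

Lemma invImpL : forall n G D, G3h n G D -> forall A B G0,
  Permutation G (Imp A B :: G0) -> G3h n G0 (A :: D) /\ G3h n (B :: G0) D.
Proof.
  induction 1; intros A0 B0 G0 HP.
  - assert (In (Var p) G0).
    { assert (In (Var p) (Imp A0 B0 :: G0)) by (rewrite <- HP; inhd).
      destruct H1; [discriminate|auto]. }
    assert (In (Var p) D') by (inhd).
    split; apply (ax_in _ p); simpl; auto.
  - assert (In Bot G0).
    { assert (In Bot (Imp A0 B0 :: G0)) by (rewrite <- HP; inhd).
      destruct H0; [discriminate|auto]. }
    split; apply bot_in; simpl; auto.
  - rewrite HP in H1. apply pcase in H1 as [[E P]|[Hne (k & P1 & P2)]].
    + injection E as E1 E2; subst. split.
      * eapply G3h_mono; [eapply G3h_perm; [exact H| |]|]; [symmetry; exact P|reflexivity|lia].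
      * eapply G3h_mono; [eapply G3h_perm; [exact H0| |]|]; [symmetry; apply perm_skip; exact P|reflexivity|lia].
    + destruct (IHG3h1 A0 B0 k P2) as [I1 I2]. destruct (IHG3h2 A0 B0 (B :: k) ltac:(psolve)) as [I3 I4].
      split.
      * eapply (H_ImpL _ A B k).
        -- eapply G3h_perm; [apply I1 | |]; psolve.
        -- eapply G3h_perm; [apply I3 | |]; psolve.
        -- psolve.
      * eapply (H_ImpL _ A B (B0 :: k)).
        -- eapply G3h_perm; [apply I2 | |]; psolve.
        -- eapply G3h_perm; [apply I4 | |]; psolve.
        -- psolve.
  - destruct (IHG3h A0 B0 (A :: G0) ltac:(psolve)) as [I1 I2]. split.
    + eapply (H_ImpR _ A B _ (A0 :: D)); [eapply G3h_perm; [apply I1| |]|]; psolve.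
    + eapply (H_ImpR _ A B _ D); [eapply G3h_perm; [apply I2| |]|]; psolve.
  - rewrite HP in H0. apply pcase in H0 as [[E P]|[Hne (k & P1 & P2)]]; [discriminate|].
    destruct (IHG3h A0 B0 (A :: Box A :: k) ltac:(psolve)) as [I1 I2]. split.
    + eapply (H_BoxL _ A k); [eapply G3h_perm; [apply I1| |]|]; psolve.
    + eapply (H_BoxL _ A (B0 :: k)); [eapply G3h_perm; [apply I2| |]|]; psolve.
  - rewrite HP in H0. apply split_box in H0 as [(Gw' & P1 & P2)|(E & S' & HE & _)]; [|discriminate].
    split.
    + eapply (H_BoxR _ A G Gw' (A0 :: Dw)); [eassumption|psolve|psolve].
    + eapply (H_BoxR _ A G (B0 :: Gw') Dw); [eassumption|psolve|psolve].
Qed.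

Lemma contrVar : forall n G D, G3h n G D -> forall p G0,
  Permutation G (Var p :: Var p :: G0) -> G3h n (Var p :: G0) D.
Proof.
  induction 1; intros q G0 HP.
  - apply (ax_in _ p).
    + assert (In (Var p) (Var q :: Var q :: G0)) by (rewrite <- HP; inhd).
      simpl in *; tauto.
    + inhd.
  - apply bot_in.
    assert (In Bot (Var q :: Var q :: G0)) by (rewrite <- HP; inhd).
    simpl in *; intuition discriminate.
  - rewrite HP in H1. apply pcase in H1 as [[E P]|[Hne (k & P1 & P2)]]; [discriminate|].
    apply pcase in P1 as [[E P]|[Hne2 (k2 & P3 & P4)]]; [discriminate|].
    eapply (H_ImpL _ A B (Var q :: k2)).
    + eapply IHG3h1. rewrite P2, P4. reflexivity.
    + eapply G3h_perm; [eapply (IHG3h2 q (B :: k2)) | |]; [rewrite P2, P4; psolve0|psolve0|reflexivity].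
    + psolve.
  - eapply (H_ImpR _ A B _ D); [eapply G3h_perm; [apply (IHG3h q (A :: G0))| |]|]; [psolve|psolve|reflexivity|eassumption].
  - rewrite HP in H0. apply pcase in H0 as [[E P]|[Hne (k & P1 & P2)]]; [discriminate|].
    apply pcase in P1 as [[E P]|[Hne2 (k2 & P3 & P4)]]; [discriminate|].
    eapply (H_BoxL _ A (Var q :: k2)).
    + eapply G3h_perm; [eapply (IHG3h q (A :: Box A :: k2)) | |]; [rewrite P2, P4; psolve0|psolve0|reflexivity].
    + psolve.
  - rewrite HP in H0. apply split_box in H0 as [(Gw' & P1 & P2)|(E & S' & HE & _)]; [|discriminate].
    eapply H_BoxR; eassumption.
Qed.
Fixpoint unboxes (l : list form) : list form :=
  match l with [] => [] | Box A :: l => A :: unboxes l | _ :: l => unboxes l end.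
Fixpoint nonboxes (l : list form) : list form :=
  match l with [] => [] | Box A :: l => nonboxes l | x :: l => x :: nonboxes l end.

Lemma nb_split : forall l, Permutation l (nonboxes l ++ boxes (unboxes l)).
Proof.
  induction l as [|a l IH]; simpl; auto.
  destruct a; simpl; try (apply perm_skip; exact IH).
  unfold boxes in *; simpl. rewrite IH at 1. apply Permutation_middle.
Qed.

Lemma unboxes_app : forall a b, unboxes (a ++ b) = unboxes a ++ unboxes b.
Proof. induction a as [|x a IH]; intros; simpl; auto. destruct x; simpl; rewrite ?IH; auto. Qed.
Lemma unboxes_boxes : forall S, unboxes (boxes S) = S.
Proof. induction S; simpl; auto. unfold boxes in *; simpl; congruence. Qed.
Lemma unboxes_perm : forall l l', Permutation l l' -> Permutation (unboxes l) (unboxes l').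
Proof.
  induction 1; simpl; auto.
  - destruct x; simpl; auto.
  - destruct x, y; simpl; auto; apply perm_swap.
  - etransitivity; eauto.
Qed.

Lemma boxes_sub : forall G Gw S, Permutation G (Gw ++ boxes S) ->
  Permutation (boxes (unboxes G)) (boxes (unboxes Gw) ++ boxes S).
Proof.
  intros. apply unboxes_perm in H. rewrite unboxes_app, unboxes_boxes in H.
  unfold boxes. rewrite <- map_app. apply Permutation_map. exact H.
Qed.

Definition G3 G D := exists n, G3h n G D.

Lemma G3_perm : forall G D G2 D2, G3 G D -> Permutation G G2 -> Permutation D D2 -> G3 G2 D2.
Proof. intros G D G2 D2 [n H] P1 P2. exists n. eapply G3h_perm; eauto. Qed.
Lemma G3_ImpL : forall A B G D G', G3 G (A :: D) -> G3 (B :: G) D ->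
    Permutation G' (Imp A B :: G) -> G3 G' D.
Proof. intros A B G D G' [n1 H1] [n2 H2] P. exists (S (max n1 n2)).
  eapply H_ImpL; [eapply G3h_mono; [exact H1|lia] | eapply G3h_mono; [exact H2|lia] | exact P]. Qed.
Lemma G3_ImpR : forall A B G D D', G3 (A :: G) (B :: D) -> Permutation D' (Imp A B :: D) -> G3 G D'.
Proof. intros A B G D D' [n H] P. exists (S n). eapply H_ImpR; eauto. Qed.
Lemma G3_BoxL : forall A G D G', G3 (A :: Box A :: G) D -> Permutation G' (Box A :: G) -> G3 G' D.
Proof. intros A G D G' [n H] P. exists (S n). eapply H_BoxL; eauto. Qed.
Lemma G3_BoxR : forall A G Gw Dw G' D', G3 (boxes G) [A] ->
    Permutation G' (Gw ++ boxes G) -> Permutation D' (Box A :: Dw) -> G3 G' D'.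
Proof. intros A G Gw Dw G' D' [n H] P1 P2. exists (S n). eapply H_BoxR; eauto. Qed.

Lemma G3_id : forall A G D, G3 (A :: G) (A :: D).
Proof.
  induction A; intros G D.
  - exists 0. apply bot_in. left; auto.
  - exists 0. apply (ax_in _ n); left; auto.
  - eapply (G3_ImpR A1 A2 _ D); [|reflexivity].
    eapply (G3_ImpL A1 A2 (A1 :: G)); [| | psolve0].
    + eapply G3_perm; [apply (IHA1 G (A2 :: D))| |]; psolve0.
    + eapply G3_perm; [apply (IHA2 (A1 :: G) D)| |]; psolve0.
  - eapply (G3_BoxR A [A] G D); [| psolve0 | reflexivity].
    eapply (G3_BoxL A []); [| reflexivity].
    apply IHA.
Qed.
Fixpoint fsize (f : form) : nat :=
  match f with Bot => 1 | Var _ => 1 | Imp a b => S (fsize a + fsize b) | Box a => S (fsize a) end.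

Lemma cut_gen : forall s C, fsize C = s -> forall k h1 h2 G D D1 G2 D2,
  h1 + h2 = k -> Permutation D1 (C :: D) -> Permutation G2 (C :: G) -> Permutation D2 D ->
  G3h h1 G D1 -> G3h h2 G2 D2 -> G3 G D.
Proof.
  intro s; induction s as [s IHs] using lt_wf_ind.
  intros C HC k; induction k as [k IHk] using lt_wf_ind.
  intros h1 h2 G D D1 G2 D2 Hk P1 P2 P3 d1 d2.
  assert (cutS : forall C', fsize C' < s -> forall G D, G3 G (C'::D) -> G3 (C'::G) D -> G3 G D).
  { intros C' Hs G0 D0 [a Ha] [b Hb]. eapply (IHs _ Hs C' eq_refl _ a b); eauto; reflexivity. }
  assert (cutK : forall a b G D, a + b < k -> G3h a G (C::D) -> G3h b (C::G) D -> G3 G D).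
  { intros a b G0 D0 Hab Ha Hb. eapply (IHk _ Hab a b); eauto; reflexivity. }
  assert (full1 : G3h h1 G (C :: D)) by (eapply G3h_perm; eauto).
  assert (full2 : G3h h2 (C :: G) D) by (eapply G3h_perm; eauto).
  clear IHk IHs.
  revert Hk full1 P1.
  destruct d1 as [n p G0 D0 G' D' Q1 Q2 | n G0 D0 G' Q1 | n A B G0 D0 G' e1 e2 Q1
                 | n A B G0 D0 D' e Q1 | n A G0 D0 G' e Q1 | n A S1 Gw Dw G' D' e Q1 Q2];
    intros Hk full1 P1.
  -
    rewrite Q2 in P1. symmetry in P1. apply pcase in P1 as [[E P]|[Hne (k0 & R1 & R2)]].
    + subst. exists h2. eapply G3h_perm; [eapply (contrVar _ _ _ full2 p G0)| |]; [psolve|psolve|reflexivity].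
    + exists 0. apply (ax_in _ p); [inhd | eapply pin; eauto].
  - exists 0. apply bot_in. inhd.
  -
    destruct (invImpL _ _ _ full2 A B (C :: G0) ltac:(psolve)) as [I1 I2].
    eapply (G3_ImpL A B G0); [| | exact Q1].
    + eapply (cutK n h2); [lia| |].
      * eapply G3h_perm; [exact e1| |]; psolve.
      * eapply G3h_perm; [exact I1| |]; psolve.
    + eapply (cutK n h2); [lia| |].
      * eapply G3h_perm; [exact e2| |]; psolve.
      * eapply G3h_perm; [exact I2| |]; psolve.
  -
    rewrite Q1 in P1. symmetry in P1. apply pcase in P1 as [[E P]|[Hne (k0 & R1 & R2)]].
    + subst C. destruct (invImpL _ _ _ full2 A B G0 ltac:(reflexivity)) as [I1 I2].
      apply (cutS B ltac:(subst s; simpl; lia)); [| exists h2; exact I2].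
      apply (cutS A ltac:(subst s; simpl; lia)).
      * exists h2. eapply G3h_perm; [apply (wkR _ _ _ B I1)| |]; psolve.
      * exists n. eapply G3h_perm; [exact e| |]; psolve.
    + pose proof (invImpR _ _ _ full2 A B k0 R1) as I.
      eapply (G3_ImpR A B G0 k0); [|exact R1].
      eapply (cutK n h2); [lia| |].
      * eapply G3h_perm; [exact e| |]; psolve.
      * eapply G3h_perm; [exact I| |]; psolve.
  -
    eapply (G3_BoxL A G0); [|exact Q1].
    eapply (cutK n h2); [lia| |].
    + eapply G3h_perm; [exact e| |]; psolve.
    + eapply G3h_perm; [apply (wkL _ _ _ A full2)| |]; psolve.
  -
    rewrite Q2 in P1. symmetry in P1. apply pcase in P1 as [[E P]|[Hne (k0 & R1 & R2)]].
    2:{ exists (S n). eapply (H_BoxR n A S1 Gw k0); eauto. }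
    subst C. clear full2.
    revert Hk P2 P3.
    destruct d2 as [m p G3 D3 G'' D'' T1 T2 | m G3 D3 G'' T1 | m E F G3 D3 G'' f1 f2 T1
                   | m E F G3 D3 D'' f T1 | m E G3 D3 G'' f T1 | m F S2 Gw2 Dw2 G'' D'' f T1 T2];
      intros Hk P2 P3.
    + exists 0. apply (ax_in _ p).
      * assert (In (Var p) (Box A :: G')) by (rewrite <- P2; inhd). destruct H; [discriminate|auto].
      * rewrite <- P3. inhd.
    + exists 0. apply bot_in.
      assert (In Bot (Box A :: G')) by (rewrite <- P2; inhd). destruct H; [discriminate|auto].
    + rewrite T1 in P2. symmetry in P2. apply pcase in P2 as [[EE _]|[Hne2 (k1 & U1 & U2)]]; [discriminate|].
      destruct (invImpL _ _ _ full1 E F k1 U1) as [I1 I2].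
      eapply (G3_ImpL E F k1); [| | exact U1].
      * eapply (cutK (S n) m); [lia| |].
        -- eapply G3h_perm; [exact I1| |]; psolve.
        -- eapply G3h_perm; [exact f1| |]; psolve.
      * eapply (cutK (S n) m); [lia| |].
        -- eapply G3h_perm; [exact I2| |]; psolve.
        -- eapply G3h_perm; [exact f2| |]; psolve.
    + assert (R : Permutation (Box A :: D) (Imp E F :: (Box A :: D3))) by psolve.
      pose proof (invImpR _ _ _ full1 E F _ R) as I.
      eapply (G3_ImpR E F G' D3); [|psolve].
      eapply (cutK (S n) m); [lia| |].
      * eapply G3h_perm; [exact I| |]; psolve.
      * eapply G3h_perm; [exact f| |]; psolve.
    + rewrite T1 in P2. symmetry in P2. apply pcase in P2 as [[EE U]|[Hne2 (k1 & U1 & U2)]].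
      * injection EE as <-.
        apply (cutS A ltac:(subst s; simpl; lia)).
        -- exists n. eapply G3h_perm; [apply (G3h_weak _ _ _ e Gw D)| |]; psolve.
        -- eapply (cutK (S n) m); [lia| |].
           ++ eapply G3h_perm; [apply (wkL _ _ _ A full1)| |]; psolve.
           ++ eapply G3h_perm; [exact f| |]; psolve.
      * eapply (G3_BoxL E k1); [|exact U1].
        eapply (cutK (S n) m); [lia| |].
        -- eapply G3h_perm; [apply (wkL _ _ _ E full1)| |]; psolve.
        -- eapply G3h_perm; [exact f| |]; psolve.
    + rewrite T1 in P2. symmetry in P2.
      apply split_box in P2 as [(Gw' & U1 & U2)|(E & S' & HE & U1 & U2)].
      * exists (S m). eapply (H_BoxR m F S2 Gw' Dw2); [exact f|exact U2|rewrite <- P3; exact T2].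
      * injection HE as <-.
        pose proof (boxes_sub _ _ _ Q1) as B1.
        pose proof (boxes_sub _ _ _ U2) as B2.
        assert (Pb : Permutation (boxes S2) (Box A :: boxes S')) by (apply (Permutation_map Box U1)).
        assert (d1' : G3h (S n) (boxes (unboxes G')) [Box A; F]).
        { eapply (H_BoxR n A S1 (boxes (unboxes Gw)) [F]); [exact e|exact B1|reflexivity]. }
        assert (d2' : G3h m (Box A :: boxes (unboxes G')) [F]).
        { eapply G3h_perm; [apply (G3h_weak _ _ _ f (boxes (unboxes Gw2)) [])| |].
          - clear - Pb B2. psolve.
          - reflexivity. }
        eapply (G3_BoxR F (unboxes G') (nonboxes G') Dw2).
        -- eapply (cutK (S n) m); [lia|exact d1'|exact d2'].
        -- apply nb_split.
        -- rewrite <- P3; exact T2.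
Qed.

Lemma cut : forall C G D, G3 G (C :: D) -> G3 (C :: G) D -> G3 G D.
Proof. intros C G D [a Ha] [b Hb]. eapply (cut_gen _ C eq_refl _ a b G D); eauto; reflexivity. Qed.
Lemma G3s_G3 : forall G D, G3s G D -> G3 G D.
Proof.
  induction 1.
  - exists 0. eapply H_Ax; eauto.
  - exists 0. eapply H_Bot; eauto.
  - eapply G3_ImpL; eauto.
  - eapply G3_ImpR; eauto.
  - eapply G3_BoxL; eauto.
  - eapply G3_BoxR; eauto.
Qed.

Lemma G3h_G3s : forall n G D, G3h n G D -> G3s G D.
Proof.
  induction 1.
  - eapply G3s_Ax; eauto.
  - eapply G3s_BotL; eauto.
  - eapply G3s_ImpL; eauto.
  - eapply G3s_ImpR; eauto.
  - eapply G3s_BoxL; eauto.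
  - eapply G3s_BoxR; eauto.
Qed.

Lemma G3_wkL : forall A G D, G3 G D -> G3 (A :: G) D.
Proof. intros A G D [n H]. exists n. apply wkL; auto. Qed.

Theorem mainTheorem3 : forall (G D : list form) (A B : form),
  G3s G (D ++ [Box A; Box B]) ->
  G3s G (D ++ [Box (Imp A B); Box B]) ->
  G3s G (D ++ [Box B]).
Proof.
  intros G D A B H1 H2.
  apply G3s_G3 in H1. apply G3s_G3 in H2.
  assert (d1 : G3 G (Box A :: Box B :: D)) by (eapply G3_perm; [exact H1| |]; psolve0).
  assert (d2 : G3 G (Box (Imp A B) :: Box B :: D)) by (eapply G3_perm; [exact H2| |]; psolve0).
  assert (X : G3 (Box A :: Box (Imp A B) :: G) (Box B :: D)).
  { eapply (G3_BoxR B [A; Imp A B] G D); [| psolve0 | reflexivity].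
    eapply (G3_BoxL A [Box (Imp A B)]); [| reflexivity].
    eapply (G3_BoxL (Imp A B) [A; Box A]); [| psolve0].
    eapply (G3_ImpL A B [Box (Imp A B); A; Box A]); [| | psolve0].
    - eapply G3_perm; [apply (G3_id A [Box (Imp A B); Box A] [B])| |]; psolve0.
    - eapply G3_perm; [apply (G3_id B [Box (Imp A B); A; Box A] [])| |]; psolve0. }
  assert (Y : G3 (Box (Imp A B) :: G) (Box B :: D)).
  { apply (cut (Box A)); [apply G3_wkL; exact d1 | exact X]. }
  assert (Z : G3 G (Box B :: D)) by (apply (cut (Box (Imp A B))); [exact d2 | exact Y]).
  destruct Z as [n Z]. eapply G3h_G3s. eapply G3h_perm; [exact Z| |]; psolve0.
Qed.
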